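(* Let $q$ be a prime power, $1\le k<n\le m$, let $g_1,\dots,g_n\in\mathbb{F}_{q^m}$ be linearly independent over $\mathbb{F}_q$, and let $\mathcal{G}$ be the Gabidulin code of dimension $k$ with respect to $g_1,\dots,g_n$. Then for every $f\in\mathcal{L}_q(x,\mathbb{F}_{q^m})$ with $\deg_q(f)=k$, the word $\sigma_f=(f(g_1),\dots,f(g_n))$ is a deep hole of $\mathcal{G}$ in the rank metric, i.e. $d_R(\sigma_f,\mathcal{G})=n-k$, which equals the covering radius of $\mathcal{G}$. Consequently $\mathcal{G}$ has at least $(q^m-1)q^{mk}$ deep holes in the rank metric.
   Context: A $q$-linearized polynomial over $\mathbb{F}_{q^m}$ is a polynomial $L(x)=\sum_{i=0}^{d}a_ix^{q^i}$ with $a_i\in\mathbb{F}_{q^m}$; if $a_d\ne0$, $d$ is its $q$-degree $\deg_q(L)$. $\mathcal{L}_q(x,\mathbb{F}_{q^m})$ is the set of these. Rank weight: for $\mathbf{u}=(u_1,\dots,u_n)\in\mathbb{F}_{q^m}^n$, $w_R(\mathbf{u})=\dim_{\mathbb{F}_q}\langle u_1,\dots,u_n\rangle$ (the rank of the matrix of coordinates of the $u_j$ in an $\mathbb{F}_q$-basis of $\mathbb{F}_{q^m}$); $d_R(\mathbf{u},\mathbf{v})=w_R(\mathbf{u}-\mathbf{v})$, $d_R(\mathbf{u},C)=\min_{\mathbf{c}\in C}d_R(\mathbf{u},\mathbf{c})$. The covering radius of $C$ is $\max_{\mathbf{u}\in\mathbb{F}_{q^m}^n}d_R(\mathbf{u},C)$,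 and a deep hole is a word attaining it. The Gabidulin code of dimension $k$ with respect to $\mathbb{F}_q$-linearly independent $g_1,\dots,g_n$ is $\mathcal{G}=\{(v(g_1),\dots,v(g_n)) : v\in\mathcal{L}_q(x,\mathbb{F}_{q^m}),\ v=0\text{ or }\deg_q(v)<k\}$; its covering radius in the rank metric is known to be $n-k$. *)

(* Defs.v *)
From HB Require Import structures.
From mathcomp Require Import all_boot all_order all_algebra all_field.
Set Implicit Arguments. Unset Strict Implicit. Unset Printing Implicit Defensive.
Import GRing.Theory.
Local Open Scope ring_scope.

Section Gabidulin.
Variables (F : finFieldType) (L : fieldExtType F).

(* A q-linearized polynomial sum_i a_i x^(q^i) is represented by the
   ordinary polynomial p with coefficients p`_i = a_i; its q-degree is
   (size p).-1, and it is zero iff p = 0. *)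
Definition lin_eval (q : nat) (p : {poly L}) (x : L) : L :=
  \sum_(i < size p) p`_i * x ^+ (q ^ i).

Definition rank_weight (n : nat) (u : n.-tuple L) : nat := \dim <<(u : seq L)>>%VS.

Definition rank_dist (n : nat) (u v : n.-tuple L) : nat :=
  rank_weight [tuple tnth u i - tnth v i | i < n].

Definition eval_word (q n : nat) (g : n.-tuple L) (p : {poly L}) : n.-tuple L :=
  [tuple lin_eval q p (tnth g i) | i < n].

(* Gabidulin code of dimension k w.r.t. g: evaluations of linearized
   polynomials v with v = 0 or deg_q v < k, i.e. size v <= k. *)
Definition in_gabidulin (q n k : nat) (g : n.-tuple L) (c : n.-tuple L) : Prop :=
  exists v : {poly L}, (size v <= k)%N /\ c = eval_word q g v.

Definition is_dist_to_code (n : nat) (C : n.-tuple L -> Prop) (u : n.-tuple L)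
    (d : nat) : Prop :=
  (exists c, C c /\ rank_dist u c = d) /\ (forall c, C c -> (d <= rank_dist u c)%N).

Definition is_covering_radius (n : nat) (C : n.-tuple L -> Prop) (r : nat) : Prop :=
  (exists u, is_dist_to_code C u r) /\
  (forall u d, is_dist_to_code C u d -> (d <= r)%N).

Definition deep_hole (n : nat) (C : n.-tuple L -> Prop) (u : n.-tuple L) : Prop :=
  exists r, is_covering_radius C r /\ is_dist_to_code C u r.

End Gabidulin.

(* Main.v *)
Require Import Defs.
From HB Require Import structures.
From mathcomp Require Import all_boot all_order all_algebra all_field all_fingroup all_solvable.
From mathcomp Require Import zify.
Set Implicit Arguments. Unset Strict Implicit. Unset Printing Implicit Defensive.
Import GRing.Theory.
Local Open Scope ring_scope.

Section Lin.
Variables (F : finFieldType) (L : fieldExtType F).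
Local Notation q := #|F|.

Lemma q_gt1 : (1 < q)%N. Proof. exact: finNzRing_gt1. Qed.

Lemma pnat_q i : [pchar L].-nat (q ^ i)%N.
Proof.
have [p pr_p pF] := finPcharP F.
have := abelem_pgroup (fin_ring_pchar_abelem pF).
rewrite /pgroup cardsT => hp.
rewrite pnatX; apply/orP; left.
have pL : p \in [pchar L]%R by rewrite pchar_lalg.
by rewrite (eq_pnat _ (pcharf_eq pL)).
Qed.

Lemma frobD i (x y : L) : (x + y) ^+ (q ^ i) = x ^+ (q ^ i) + y ^+ (q ^ i).
Proof. exact: exprDn_pchar (pnat_q i). Qed.

Lemma expF i (c : F) : c ^+ (q ^ i) = c.
Proof. elim: i => [|i IH]; first by rewrite expn0 expr1.
by rewrite expnSr exprM IH expf_card. Qed.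

Lemma frobZ i (c : F) (x : L) : (c *: x) ^+ (q ^ i) = c *: x ^+ (q ^ i).
Proof. by rewrite exprZn expF. Qed.


Lemma lin_evalE (p : {poly L}) N x : (size p <= N)%N ->
  lin_eval q p x = \sum_(i < N) p`_i * x ^+ (q ^ i).
Proof.
move=> hN; rewrite /lin_eval (big_ord_widen N (fun i => p`_i * x ^+ (q ^ i))) //.
rewrite big_mkcond; apply: eq_bigr => i _; case: ifP => // /negbT.
by rewrite -leqNgt => /(nth_default 0) ->; rewrite mul0r.
Qed.

Lemma lin_evalD (p r : {poly L}) x :
  lin_eval q (p + r) x = lin_eval q p x + lin_eval q r x.
Proof.
set N := maxn (size p) (size r).
rewrite !(@lin_evalE _ N) ?leq_maxl ?leq_maxr ?size_polyD // -big_split.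
by apply: eq_bigr => i _; rewrite coefD mulrDl.
Qed.

Lemma lin_evalN (p : {poly L}) x : lin_eval q (- p) x = - lin_eval q p x.
Proof.
rewrite !(@lin_evalE _ (size p)) ?size_polyN // -sumrN.
by apply: eq_bigr => i _; rewrite coefN mulNr.
Qed.

Lemma lin_evalB (p r : {poly L}) x :
  lin_eval q (p - r) x = lin_eval q p x - lin_eval q r x.
Proof. by rewrite lin_evalD lin_evalN. Qed.

Lemma lin_eval_addx (p : {poly L}) x y :
  lin_eval q p (x + y) = lin_eval q p x + lin_eval q p y.
Proof. rewrite /lin_eval -big_split; apply: eq_bigr => i _; by rewrite frobD mulrDr. Qed.

Lemma lin_eval_scalex (p : {poly L}) (c : F) x :
  lin_eval q p (c *: x) = c *: lin_eval q p x.
Proof. rewrite /lin_eval scaler_sumr; apply: eq_bigr => i _; by rewrite frobZ scalerAr. Qed.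

Definition lmap (p : {poly L}) : L -> L := lin_eval q p.

HB.instance Definition _ p :=
  GRing.isSemilinear.Build F L L _ (lmap p)
    ((fun c x => lin_eval_scalex p c x), (fun x y => lin_eval_addx p x y)).

Definition hl (p : {poly L}) : 'End(L) := linfun (lmap p).

Lemma hlE p x : hl p x = lin_eval q p x.
Proof. by rewrite lfunE. Qed.


Lemma ker_bound (p : {poly L}) (V : {vspace L}) : p != 0 ->
  (forall x, x \in V -> lin_eval q p x = 0) -> (\dim V <= (size p).-1)%N.
Proof.
move=> p0 hV; set s := size p.
have s0 : (0 < s)%N by rewrite size_poly_gt0.
pose P : {poly L} := \sum_(i < s) p`_i *: 'X^(q ^ i).
have hP x : P.[x] = lin_eval q p x.
  by rewrite horner_sum; apply: eq_bigr => i _; rewrite hornerZ hornerXn.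
have coefP j : P`_j = \sum_(i < s) p`_i * (j == (q ^ i)%N)%:R.
  by rewrite coef_sum; apply: eq_bigr => i _; rewrite coefZ coefXn.
have Plead : P`_(q ^ s.-1)%N = lead_coef p.
  have hs : (s.-1 < s)%N by rewrite prednK.
  rewrite coefP (bigD1 (Ordinal hs)) //= eqxx mulr1 big1 ?addr0 //.
  move=> i /eqP hi; rewrite eqn_exp2l ?q_gt1 //.
  case: eqP => [e|]; last by rewrite mulr0.
  by exfalso; apply: hi; apply: val_inj => /=.
have P0 : P != 0.
  by apply/eqP => e; move: Plead; rewrite e coef0 => /esym/eqP; rewrite lead_coef_eq0 (negbTE p0).
have sizeP : (size P <= (q ^ s.-1).+1)%N.
  apply/leq_sizeP => j hj; rewrite coefP big1 // => i _.
  have : (q ^ i <= q ^ s.-1)%N by rewrite leq_exp2l ?q_gt1 // -ltnS prednK.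
  move=> hle; case: eqP => [e|_]; last by rewrite mulr0.
  by move: hj; rewrite e => hj; move: (leq_ltn_trans hle hj); rewrite ltnn.
pose rs := enum (V : {vspace finvect_type L}).
have := max_poly_roots P0 _ (enum_uniq _ : uniq rs).
have -> : size rs = (q ^ \dim V)%N by rewrite /rs -cardE card_vspace.
move=> H.
have : (q ^ \dim V < size P)%N.
  apply: H; apply/allP => x xV.
  have xV' : x \in V.
    have := xV; rewrite /rs.
    by have -> := @mem_enum (finvect_type L) (V : {vspace finvect_type L}) x.
  by rewrite rootE hP hV.
move=> h2; have := leq_trans h2 sizeP; rewrite ltnS leq_exp2l ?q_gt1 //.
Qed.


Lemma span_take_dim (g : seq L) k : free g -> (k <= size g)%N ->
  \dim <<take k g>> = k.
Proof.
move=> fg hk; have : free (take k g) by apply: (@catl_free _ _ (drop k g)); rewrite cat_take_drop.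
by move/eqP->; rewrite size_take_min; apply/minn_idPl.
Qed.

Lemma vanish_take (p : {poly L}) (g : seq L) k : (k <= size g)%N ->
  (forall j, (j < k)%N -> lin_eval q p g`_j = 0) ->
  forall x, x \in <<take k g>>%VS -> lin_eval q p x = 0.
Proof.
move=> hk hv x xV.
have : (<<take k g>> <= lker (hl p))%VS.
  apply/span_subvP => y /(nthP 0) [j hj <-].
  rewrite memv_ker hlE nth_take; last by move: hj; rewrite size_take_min leq_min => /andP[].
  by rewrite hv //; move: hj; rewrite size_take_min leq_min => /andP[].
by move=> /subvP /(_ x xV); rewrite memv_ker hlE => /eqP.
Qed.

Lemma interp (g : seq L) k (w : nat -> L) : free g -> (k <= size g)%N ->
  exists v : {poly L}, (size v <= k)%N /\
    forall j, (j < k)%N -> lin_eval q v g`_j = w j.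
Proof.
move=> fg hk.
pose M : 'M[L]_k := \matrix_(i, j) g`_j ^+ (q ^ i).
have evalM (a : 'rV[L]_k) j (hj : (j < k)%N) :
    lin_eval q (rVpoly a) g`_j = (a *m M) 0 (Ordinal hj).
  rewrite (@lin_evalE _ k) ?size_poly // !mxE; apply: eq_bigr => i _.
  by rewrite coef_rVpoly_ord mxE.
have uM : M \in unitmx.
  rewrite -row_free_unit; apply: inj_row_free => a aM.
  have [//|/rV0Pn [i ai]] := eqVneq a 0; exfalso.
  set pv := rVpoly a.
  have pv0 : pv != 0.
    by apply/eqP => e; move: ai; rewrite -coef_rVpoly_ord -/pv e coef0 eqxx.
  have := ker_bound pv0 (vanish_take (p := pv) hk _).
  rewrite span_take_dim //.
  have : (size pv <= k)%N by rewrite size_poly.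
  move=> h1 h2.
  have : (k <= k.-1)%N.
    have h3 : ((size pv).-1 <= k.-1)%N by rewrite -!subn1 leq_sub2r.
    apply: leq_trans h3; apply: h2 => j hj; by rewrite evalM aM mxE.
  have kpos : (0 < k)%N := leq_ltn_trans (leq0n i) (ltn_ord i).
  by move: kpos; case: (k) => // k' _ /=; rewrite ltnn.
exists (rVpoly ((\row_j w j) *m invmx M)); split; first by rewrite size_poly.
by move=> j hj; rewrite evalM mulmxKV // mxE.
Qed.


Lemma eval_word_map n (g : n.-tuple L) h :
  (eval_word q g h : seq L) = map (hl h) g.
Proof.
have -> : eval_word q g h = map_tuple (hl h) g.
  by apply: eq_from_tnth => i; rewrite tnth_mktuple tnth_map hlE.
by [].
Qed.

Lemma rank_evalE n (g : n.-tuple L) h : free g ->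
  (\dim (<<g>> :&: lker (hl h)) + rank_weight (eval_word q g h) = n)%N.
Proof.
move=> fg; rewrite /rank_weight eval_word_map -limg_span limg_ker_dim.
by move/eqP: fg ->; rewrite size_tuple.
Qed.

Lemma distE n (g : n.-tuple L) p r :
  rank_dist (eval_word q g p) (eval_word q g r) = rank_weight (eval_word q g (p - r)).
Proof.
rewrite /rank_dist; congr rank_weight; apply: eq_from_tnth => i.
by rewrite !tnth_mktuple lin_evalB.
Qed.

Lemma ker_small n (g : n.-tuple L) (h : {poly L}) (k : nat) : h != 0 -> (size h <= k.+1)%N ->
  (\dim (<<g>> :&: lker (hl h)) <= k)%N.
Proof.
move=> h0 hs; apply: leq_trans (ker_bound h0 _) _.
  by move=> x; rewrite memv_cap memv_ker hlE => /andP[_ /eqP].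
by rewrite -ltnS; case: (size h) hs.
Qed.

Lemma lower n k (g : n.-tuple L) (f v : {poly L}) : free g -> size f = k.+1 -> (size v <= k)%N ->
  (n - k <= rank_dist (eval_word q g f) (eval_word q g v))%N.
Proof.
move=> fg sf sv; rewrite distE.
have sh : size (f - v) = k.+1 by rewrite size_polyDl ?size_polyN ?sf.
have h0 : f - v != 0 by rewrite -size_poly_eq0 sh.
have := rank_evalE (f - v) fg; have := ker_small g h0 (eq_leq sh).
lia.
Qed.


Lemma exact_dist n k (g : n.-tuple L) (f : {poly L}) : free g -> (k <= n)%N ->
  size f = k.+1 ->
  exists v : {poly L}, (size v <= k)%N /\
     rank_dist (eval_word q g f) (eval_word q g v) = (n - k)%N.
Proof.
move=> fg kn sf.
have kg : (k <= size g)%N by rewrite size_tuple.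
have [v [sv hv]] := interp (fun j => lin_eval q f g`_j) fg kg.
exists v; split => //; apply/eqP; rewrite eqn_leq lower // andbT distE.
have sh : size (f - v) = k.+1 by rewrite size_polyDl ?size_polyN ?sf.
have h0 : f - v != 0 by rewrite -size_poly_eq0 sh.
have hsub : (<<take k g>> <= <<g>> :&: lker (hl (f - v)))%VS.
  rewrite subv_cap; apply/andP; split.
    by apply/span_subvP => x /mem_take xg; apply: memv_span.
  apply/subvP => x xV; rewrite memv_ker hlE (vanish_take kg _ xV) //.
  by move=> j hj; rewrite lin_evalB hv // subrr.
have := dimvS hsub; rewrite span_take_dim //.
have := rank_evalE (f - v) fg.
lia.
Qed.

Lemma cover n k (g : n.-tuple L) (u : n.-tuple L) : free g -> (k <= n)%N ->
  exists v : {poly L}, (size v <= k)%N /\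
     (rank_dist u (eval_word q g v) <= n - k)%N.
Proof.
move=> fg kn.
have kg : (k <= size g)%N by rewrite size_tuple.
have [v [sv hv]] := interp (fun j => nth 0 (u : seq L) j) fg kg.
exists v; split => //.
set w := [tuple tnth u i - tnth (eval_word q g v) i | i < n].
rewrite /rank_dist -/w /rank_weight.
have hw j : (j < k)%N -> nth 0 (w : seq L) j = 0.
  move=> hj; have jn : (j < n)%N by apply: leq_trans hj kn.
  rewrite -(tnth_nth 0 w (Ordinal jn)) tnth_mktuple tnth_mktuple.
  by rewrite !(tnth_nth 0) /= hv // subrr.
have : (<<w : seq L>> <= <<drop k w>>)%VS.
  apply/span_subvP => x /(nthP 0) [j hj <-].
  case: (ltnP j k) => hjk; first by rewrite hw // mem0v.
  apply: memv_span; rewrite -(subnKC hjk) -nth_drop; apply: mem_nth.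
  by rewrite size_drop; move: hj; rewrite size_tuple => hj; lia.
move/dimvS => h1; apply: leq_trans h1 _; apply: leq_trans (dim_span _) _.
by rewrite size_drop size_tuple.
Qed.


Lemma rank_dist_self n (u : n.-tuple L) : rank_dist u u = 0%N.
Proof.
apply/eqP; rewrite -leqn0 /rank_dist /rank_weight.
have : (<<[tuple tnth u i - tnth u i | i < n] : seq L>> <= 0)%VS.
  apply/span_subvP => x /(nthP 0) [j hj <-].
  rewrite size_tuple in hj.
  by rewrite -(tnth_nth 0 _ (Ordinal hj)) tnth_mktuple subrr mem0v.
by move/dimvS; rewrite dimv0.
Qed.

Lemma eval_inj n k (g : n.-tuple L) (f1 f2 : {poly L}) : free g -> (k < n)%N ->
  (size f1 <= k.+1)%N -> (size f2 <= k.+1)%N ->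
  eval_word q g f1 = eval_word q g f2 -> f1 = f2.
Proof.
move=> fg kn s1 s2 e; apply/eqP; rewrite -subr_eq0; apply: contraT => h0.
have hs : (size (f1 - f2)%R <= k.+1)%N.
  by apply: leq_trans (size_polyD f1 (- f2)) _; rewrite size_polyN geq_max s1 s2.
have := ker_small g h0 hs; have := rank_evalE (f1 - f2) fg.
have := rank_dist_self (eval_word q g f1); rewrite {2}e distE.
move=> a b c; move: b; rewrite a addn0 => b; move: c; rewrite b => c; by move: (leq_trans kn c); rewrite ltnn.
Qed.

End Lin.

Theorem corollary1 (F : finFieldType) (L : fieldExtType F) (q m n k : nat)
  (hq : #|F| = q) (hm : \dim {:L} = m)
  (hk : (1 <= k)%N) (hkn : (k < n)%N) (hnm : (n <= m)%N)
  (g : n.-tuple L) (hg : free (g : seq L)) :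
  (forall f : {poly L}, size f = k.+1 ->
     is_dist_to_code (in_gabidulin q k g) (eval_word q g f) (n - k) /\
     is_covering_radius (in_gabidulin q k g) (n - k) /\
     deep_hole (in_gabidulin q k g) (eval_word q g f)) /\
  (exists s : seq (n.-tuple L),
     [/\ uniq s, ((q ^ m - 1) * q ^ (m * k) <= size s)%N &
         forall u, u \in s -> deep_hole (in_gabidulin q k g) u]).
Proof.
subst q m.
have hd : forall f : {poly L}, size f = k.+1 ->
    is_dist_to_code (in_gabidulin #|F| k g) (eval_word #|F| g f) (n - k).
  move=> f sf; split.
    have [v [sv hv]] := exact_dist hg (ltnW hkn) sf.
    by exists (eval_word #|F| g v); split => //; exists v.
  by move=> c [v [sv ->]]; apply: lower.
have hcov : is_covering_radius (in_gabidulin #|F| k g) (n - k).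
  split; first by exists (eval_word #|F| g 'X^k); apply: hd; rewrite size_polyXn.
  move=> u d [_ hu].
  have [v [sv hv]] := cover u hg (ltnW hkn).
  apply: leq_trans hv; apply: hu; by exists v.
have part1 : forall f : {poly L}, size f = k.+1 ->
     is_dist_to_code (in_gabidulin #|F| k g) (eval_word #|F| g f) (n - k) /\
     is_covering_radius (in_gabidulin #|F| k g) (n - k) /\
     deep_hole (in_gabidulin #|F| k g) (eval_word #|F| g f).
  move=> f sf; split; first exact: hd.
  split => //; exists (n - k)%N; split => //; exact: hd.
split => //.
pose T := finvect_type L.
pose mk (x : T * 'rV[T]_k) : {poly L} := x.1 *: 'X^k + rVpoly (x.2 : 'rV[L]_k).
have smk x : (size (mk x) <= k.+1)%N.
  apply: leq_trans (size_polyD _ _) _; rewrite geq_max; apply/andP; split.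
    by apply: leq_trans (size_scale_leq _ _) _; rewrite size_polyXn.
  by apply: leq_trans (size_poly _ _) _.
have smk1 x : x.1 != 0 -> size (mk x) = k.+1.
  move=> x0; rewrite /mk size_polyDl size_scale // size_polyXn //.
  by rewrite ltnS size_poly.
have mkinj : injective mk.
  move=> [a b] [a' b'] e.
  have hk0 (c : 'rV[L]_k) : (rVpoly c)`_k = 0.
    by rewrite coef_rVpoly insubF // ltnn.
  have := congr1 (fun p : {poly L} => p`_k) e; rewrite /mk /= !coefD !coefZ !coefXn eqxx !mulr1 !hk0 !addr0 => ea.
  subst a'; congr pair; apply/rowP => i.
  have := congr1 (fun p : {poly L} => p`_i) e.
  by rewrite /mk /= !coefD !coefZ !coefXn (ltn_eqF (ltn_ord i)) !mulr0 !add0r !coef_rVpoly_ord.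
pose S := [set x : T * 'rV[T]_k | x.1 != 0].
exists [seq eval_word #|F| g (mk x) | x <- enum S]; split.
- rewrite map_inj_uniq ?enum_uniq // => x y e.
  by apply: mkinj; apply: (eval_inj hg hkn (smk x) (smk y) e).
- rewrite size_map -cardE.
  have -> : S = setX [set~ (0 : T)] [set: 'rV[T]_k].
    by apply/setP => x; rewrite !inE andbT.
  rewrite cardsX cardsC1 cardsT card_mx mul1n.
  have cT : #|T| = (#|F| ^ \dim {:L})%N.
    have := @card_vspace F T _ (fullv : {vspace T}).
    have := @card_vspacef F T _.
    by move=> -> ->.
  by rewrite cT subn1 expnM.
- move=> u /mapP [x]; rewrite mem_enum inE => x0 ->.
  by have [_ [_ ?]] := part1 _ (smk1 x x0).
Qed.
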